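(* Let $\textsc{mix}$ be a nice mixture with parameter space $\mathcal{W}$ and constant $a>0$, let $n\ge1$, $x^n\in\mathcal{X}^n$, $\mathbf{P}^n$ a sequence of $n$ probability matrices over $\mathcal{P}_+$, and $\mathbf{w}_1\in\mathcal{W}$. For $1\le i\le j\le n$ write $\ell^*(i,j,\textsc{mix}):=\ell^*(x_i^j,\mathbf{P}_i^j,\textsc{mix})$, where $x_i^j=x_i\dots x_j$ and $\mathbf{P}_i^j=\mathbf{P}_i,\dots,\mathbf{P}_j$. The minima below range over all $1\le s\le n$ and all integers $t_1=1<t_2<\dots<t_s<t_{s+1}=n+1$. 1. If $\alpha=2(1-b^{-1})/a$ with $b>1$, then $$\ell(x^n,\textsc{mix-ogd}(\mathbf{w}_1,\alpha,x^n,\mathbf{P}^n))\le\min_{s,t_2,\dots,t_s}\Big[\frac{a b^2\lvert\mathcal{W}\rvert^2}{4(b-1)}\,s + b\sum_{i=1}^s\ell^*(t_i,t_{i+1}-1,\textsc{mix})\Big].$$ 2. If $\alpha=\frac{2}{a}(1+n^{1/2})^{-1}$ and there is a constant $c>0$ such that $\ell^*(y^k,\mathbf{Q}^k,\textsc{mix})\le c\cdot k$ for all lengths $k\ge1$, all $y^k$ over $\mathcal{X}$ and all sequences $\mathbf{Q}^k$ of probability matrices over $\mathcal{P}_+$, then $$\ell(x^n,\textsc{mix-ogd}(\mathbf{w}_1,\alpha,x^n,\mathbf{P}^n))\le\min_{s,t_2,\dots,t_s}\Big[\big(a s\lvert\mathcal{W}\rvert^2+c\big)\sqrt n+\sum_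{i=1}^s\ell^*(t_i,t_{i+1}-1,\textsc{mix})\Big].$$
   Context: Let $\mathcal{X}=\{1,\dots,N\}$ with $1<N<\infty$, and $\mathcal{P}_+$ the set of probability distributions on $\mathcal{X}$ with positive probability on every letter. Fix $m>1$. A probability matrix over $\mathcal{P}_+$ is $\mathbf{P}=(\mathbf{p}(1)\cdots\mathbf{p}(N))$ with $\mathbf{p}(x)=(p_1(x),\dots,p_m(x))^{\mathsf T}$, $p_i\in\mathcal{P}_+$. $\ell(x,p):=-\log_2p(x)$. A mixture with parameter space $\mathcal{W}\subseteq\mathbb{R}^m$ maps $(\mathbf{w},\mathbf{P})$, $\mathbf{w}\in\mathcal{W}$, to $\textsc{mix}(\mathbf{w},\mathbf{P})\in\mathcal{P}_+$. It is nice if (1) $\mathcal{W}$ is non-empty, compact, convex; (2) $\mathbf{w}\mapsto\ell(x,\textsc{mix}(\mathbf{w},\mathbf{P}))$ is convex on $\mathcal{W}$ and (3) differentiable, for all $\mathbf{P}$ over $\mathcal{P}_+$, $x\in\mathcal{X}$; (4) there is $a>0$ with $\lvert\nabla_{\mathbf{w}}\ell(x,\textsc{mix}(\mathbf{w},\mathbf{P}))\rvert^2\le a\,\ell(x,\textsc{mix}(\mathbf{w},\mathbf{P}))$ for all $\mathbf{w}\in\mathcal{W}$, $\mathbf{P}$, $x$. $\lvert\mathcal{W}\rvert:=\sup_{\mathbf{u},\mathbf{v}\in\mathcal{W}}\lvert\mathbf{u}-\mathbf{v}\rvert$ (Euclidean diameter). Algorithm $\textsc{mix-ogd}(\mathbf{w}_1,\alpha,x^n,\mathbf{P}^n)$: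 for $k=1,\dots,n$ code $x_k$ with $\ell(x_k,\textsc{mix}(\mathbf{w}_k,\mathbf{P}_k))$ bits, then $\mathbf{w}_{k+1}=\mathrm{proj}(\mathbf{w}_k-\alpha\nabla_{\mathbf{w}}\ell(x_k,\textsc{mix}(\mathbf{w},\mathbf{P}_k))|_{\mathbf{w}=\mathbf{w}_k};\mathcal{W})$ with $\mathrm{proj}(\mathbf{v};\mathcal{W})=\arg\min_{\mathbf{w}\in\mathcal{W}}\lvert\mathbf{v}-\mathbf{w}\rvert^2$; its code length is $\ell(x^n,\textsc{mix-ogd}(\mathbf{w}_1,\alpha,x^n,\mathbf{P}^n)):=\sum_{k=1}^n\ell(x_k,\textsc{mix}(\mathbf{w}_k,\mathbf{P}_k))$. For a sequence $y^k$ and matrices $\mathbf{Q}^k$: $\ell^*(y^k,\mathbf{Q}^k,\textsc{mix}):=\min_{\mathbf{w}\in\mathcal{W}}\sum_{j=1}^k\ell(y_j,\textsc{mix}(\mathbf{w},\mathbf{Q}_j))$. *)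

(* Defs.v *)
From HB Require Import structures.
From mathcomp Require Import all_boot all_order all_algebra.
From mathcomp Require Import all_classical all_reals all_analysis.
Set Implicit Arguments. Unset Strict Implicit. Unset Printing Implicit Defensive.
Import Order.TTheory GRing.Theory Num.Theory.
Import numFieldNormedType.Exports.
Local Open Scope classical_set_scope.
Local Open Scope ring_scope.

Section Defs.
Variables (R : realType) (N m : nat).

(* Alphabet X = {1..N} is modelled by 'I_N. *)

Definition posdist (p : 'I_N -> R) : Prop :=
  (forall x, 0 < p x) /\ \sum_(x < N) p x = 1.

(* probability matrix: m x N, row i is p_i in P_+ ; P i x = p_i(x) *)
Definition probmat (P : 'M[R]_(m, N)) : Prop :=
  forall i : 'I_m, posdist (fun x => P i x).

Definition ell (x : 'I_N) (p : 'I_N -> R) : R := - (ln (p x) / ln 2).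

Definition enorm (v : 'rV[R]_m) : R := Num.sqrt (\sum_(i < m) v 0 i ^+ 2).

Definition grad (f : 'rV[R]_m -> R) (w : 'rV[R]_m) : 'rV[R]_m :=
  \row_(i < m) ('D_(delta_mx 0 i) f w).

Definition convex_set (W : set 'rV[R]_m) : Prop :=
  forall u v (t : R), W u -> W v -> 0 <= t <= 1 -> W (t *: u + (1 - t) *: v).

Definition convex_on (W : set 'rV[R]_m) (f : 'rV[R]_m -> R) : Prop :=
  forall u v (t : R), W u -> W v -> 0 <= t <= 1 ->
    f (t *: u + (1 - t) *: v) <= t * f u + (1 - t) * f v.

Definition diam (W : set 'rV[R]_m) : R :=
  sup [set enorm (u - v) | u in W & v in W].

(* A mixture is a map mix : R^m -> (m x N probability matrix) -> distribution
   on 'I_N; only its values at w in W (and, for differentiability, near W)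
   matter.  nice W mix a: the four conditions with constant a > 0. *)
Definition nice (W : set 'rV[R]_m)
    (mix : 'rV[R]_m -> 'M[R]_(m, N) -> 'I_N -> R) (a : R) : Prop :=
  [/\ W !=set0, compact W & convex_set W] /\
  (forall w P, W w -> probmat P -> posdist (mix w P)) /\
  (forall P x, probmat P -> convex_on W (fun w => ell x (mix w P))) /\
  (forall P x w, probmat P -> W w -> differentiable (fun w => ell x (mix w P)) w) /\
  0 < a /\
  (forall P x w, probmat P -> W w ->
     enorm (grad (fun w => ell x (mix w P)) w) ^+ 2 <= a * ell x (mix w P)).

(* proj(v;W) = argmin_{w in W} |v - w|^2 (exists and is unique for W nonempty,
   compact, convex) *)
Definition proj (W : set 'rV[R]_m) (v : 'rV[R]_m) : 'rV[R]_m :=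
  xget 0 [set w | W w /\ forall u, W u -> enorm (v - w) ^+ 2 <= enorm (v - u) ^+ 2].

(* ogd_w W mix w1 alpha x P k = w_{k+1}  (sequences indexed from 1) *)
Fixpoint ogd_w (W : set 'rV[R]_m) (mix : 'rV[R]_m -> 'M[R]_(m, N) -> 'I_N -> R)
    (w1 : 'rV[R]_m) (alpha : R) (x : nat -> 'I_N) (P : nat -> 'M[R]_(m, N))
    (k : nat) : 'rV[R]_m :=
  match k with
  | 0 => w1
  | k'.+1 =>
    let wk := ogd_w W mix w1 alpha x P k' in
    proj W (wk - alpha *: grad (fun w => ell (x k) (mix w (P k))) wk)
  end.

Definition ogd_len (W : set 'rV[R]_m) (mix : 'rV[R]_m -> 'M[R]_(m, N) -> 'I_N -> R)
    (w1 : 'rV[R]_m) (alpha : R) (x : nat -> 'I_N) (P : nat -> 'M[R]_(m, N))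
    (n : nat) : R :=
  \sum_(1 <= k < n.+1) ell (x k) (mix (ogd_w W mix w1 alpha x P k.-1) (P k)).

Definition lstar (W : set 'rV[R]_m) (mix : 'rV[R]_m -> 'M[R]_(m, N) -> 'I_N -> R)
    (y : nat -> 'I_N) (Q : nat -> 'M[R]_(m, N)) (i j : nat) : R :=
  inf [set \sum_(i <= k < j.+1) ell (y k) (mix w (Q k)) | w in W].

End Defs.

Definition segmentation (n s : nat) (t : nat -> nat) : Prop :=
  [/\ (1 <= s <= n)%N, t 1%N = 1%N, t s.+1 = n.+1 &
      forall i, (1 <= i <= s)%N -> (t i < t i.+1)%N].

(* Main.v *)
Require Import Defs.
From HB Require Import structures.
From mathcomp Require Import all_boot all_order all_algebra.
From mathcomp Require Import all_classical all_reals all_analysis.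
From mathcomp Require Import ring lra zify.
Set Implicit Arguments. Unset Strict Implicit. Unset Printing Implicit Defensive.
Import Order.TTheory GRing.Theory Num.Theory.
Import numFieldNormedType.Exports.
Local Open Scope classical_set_scope.
Local Open Scope ring_scope.

Section Aux.
Variables (R : realType) (m : nat).
Implicit Types (u v w : 'rV[R]_m).

Definition dot u v : R := \sum_(i < m) u 0 i * v 0 i.
Definition nsq u : R := dot u u.

Lemma nsq_ge0 u : 0 <= nsq u.
Proof. by apply: sumr_ge0 => i _; rewrite -expr2 sqr_ge0. Qed.

Lemma enorm_sq u : enorm u ^+ 2 = nsq u.
Proof.
rewrite /enorm sqr_sqrtr; last by apply: sumr_ge0 => i _; rewrite sqr_ge0.
by apply: eq_bigr => i _; rewrite expr2.
Qed.

Lemma dotC u v : dot u v = dot v u.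
Proof. by apply: eq_bigr => i _; rewrite mulrC. Qed.

Lemma nsqDZ u v (t : R) : nsq (u + t *: v) = nsq u + 2 * t * dot u v + t ^+ 2 * nsq v.
Proof.
rewrite /nsq /dot.
rewrite (eq_bigr (fun i => u 0 i * u 0 i + 2 * t * (u 0 i * v 0 i) + t ^+ 2 * (v 0 i * v 0 i))); last first.
  by move=> i _; rewrite !mxE; ring.
by rewrite !big_split /= -!mulr_sumr.
Qed.

Lemma nsqB_le u v : nsq (u - v) <= 2 * nsq u + 2 * nsq v.
Proof.
rewrite /nsq /dot !mulr_sumr -big_split /=; apply: ler_sum => i _; rewrite !mxE.
have := sqr_ge0 (u 0 i + v 0 i); rewrite expr2; nra.
Qed.

Lemma sum_cont (I : Type) (r : seq I) (g : I -> 'rV[R]_m -> R) :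
  (forall i, continuous (g i)) -> continuous (fun w => \sum_(i <- r) g i w).
Proof.
move=> hg; elim: r => [|a r IH].
  have -> : (fun w => \sum_(i <- [::]) g i w) = (fun _ => 0) by apply/funext => w; rewrite big_nil.
  exact: cst_continuous.
have -> : (fun w => \sum_(i <- a :: r) g i w) = (fun w => g a w + \sum_(i <- r) g i w).
  by apply/funext => w; rewrite big_cons.
by move=> w; apply: continuousD; [exact: hg | exact: IH].
Qed.

Lemma nsq_cont v : continuous (fun w => nsq (v - w)).
Proof.
apply: sum_cont => i w.
have h : continuous (fun w : 'rV[R]_m => (v - w) 0 i).
  have -> : (fun w : 'rV[R]_m => (v - w) 0 i) = (fun w => v 0 i - w 0 i).
    by apply/funext => z; rewrite !mxE.
  move=> z; apply: continuousB; first exact: cst_continuous.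
  exact: coord_continuous.
by apply: continuousM; apply: h.
Qed.


Lemma proj_spec (W : set 'rV[R]_m) v : W !=set0 -> compact W -> Defs.convex_set W ->
  W (Defs.proj W v) /\ forall u, W u -> nsq (Defs.proj W v - u) <= nsq (v - u).
Proof.
move=> W0 cW cvW.
have [c cW' cmin] : exists2 c, c \in W & forall t, t \in W -> nsq (v - c) <= nsq (v - t).
  apply: EVT_min_rV => //; apply: continuous_subspaceT; exact: nsq_cont.
have Hex : exists z, [set w | W w /\ forall u, W u -> enorm (v - w) ^+ 2 <= enorm (v - u) ^+ 2] z.
  exists c; split; first by rewrite inE in cW'.
  by move=> u Wu; rewrite !enorm_sq; apply: cmin; rewrite inE.
have [Wz zmin] := xgetPex 0 Hex.
rewrite /Defs.proj; set z := xget _ _ in Wz zmin *.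
split => // u Wu.
have key : forall t : R, 0 < t <= 1 -> 2 * dot (v - z) (u - z) <= t * nsq (u - z).
  move=> t /andP[t0 t1].
  have Wt : W (t *: u + (1 - t) *: z) by apply: (cvW _ _ _ Wu Wz); rewrite (ltW t0) t1.
  have := zmin _ Wt; rewrite !enorm_sq.
  have -> : v - (t *: u + (1 - t) *: z) = (v - z) + (- t) *: (u - z).
    by apply/matrixP => i j; rewrite !mxE; ring.
  rewrite nsqDZ => h.
  have : 0 <= t * (t * nsq (u - z) - 2 * dot (v - z) (u - z)) by nra.
  by rewrite pmulr_rge0 // subr_ge0.
have d0 : dot (v - z) (u - z) <= 0.
  rewrite leNgt; apply/negP => dpos.
  have nq0 := nsq_ge0 (u - z).
  have [nz|nz] := leP (nsq (u - z)) (dot (v - z) (u - z)).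
    by have := key 1; rewrite ltr01 lexx => /(_ isT); nra.
  set t := dot (v - z) (u - z) / nsq (u - z).
  have np : 0 < nsq (u - z) by apply: lt_trans nz.
  have t0 : 0 < t by rewrite divr_gt0.
  have t1 : t <= 1 by rewrite ler_pdivrMr // mul1r ltW.
  have := key t; rewrite t0 t1 => /(_ isT).
  rewrite /t mulrAC -mulrA divff ?mulr1; last by rewrite gt_eqF.
  nra.
have -> : v - u = (v - z) + 1 *: (z - u).
  by apply/matrixP => i j; rewrite !mxE; ring.
rewrite nsqDZ.
have -> : dot (v - z) (z - u) = - dot (v - z) (u - z).
  rewrite /dot -sumrN; apply: eq_bigr => i _; rewrite !mxE; ring.
have := nsq_ge0 (v - z); nra.
Qed.

Lemma diam_bound (W : set 'rV[R]_m) u v : W !=set0 -> compact W -> W u -> W v ->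
  enorm (u - v) <= diam W.
Proof.
move=> W0 cW Wu Wv.
have [c cW' cmax] : exists2 c, c \in W & forall t, t \in W -> nsq (0 - t) <= nsq (0 - c).
  apply: EVT_max_rV => //; apply: continuous_subspaceT; exact: nsq_cont.
set K := nsq (0 - c).
have hK : forall t, W t -> nsq t <= K.
  move=> t Wt; have := cmax t; rewrite inE => /(_ Wt).
  by rewrite sub0r -[nsq (- t)]/(dot _ _) /dot (eq_bigr (fun i => t 0 i * t 0 i)) // => i _; rewrite !mxE mulrNN.
have enle : forall y, enorm y <= 1 + nsq y.
  move=> y; rewrite -enorm_sq; have := sqr_ge0 (enorm y - 1); rewrite !expr2; nra.
apply: ub_le_sup; last by exists u => //; exists v.
exists (1 + 4 * K) => _ [p Wp [q Wq <-]].
apply: le_trans (enle _) _; rewrite lerD2l.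
apply: le_trans (nsqB_le _ _) _.
have := hK p Wp; have := hK q Wq; lra.
Qed.


Lemma grad_dot (f : 'rV[R]_m -> R) w v : differentiable f w ->
  dot (grad f w) v = 'D_v f w.
Proof.
move=> df; rewrite /dot /grad.
rewrite (eq_bigr (fun i => 'd f w (v 0 i *: delta_mx 0 i))); last first.
  by move=> i _; rewrite !mxE deriveE // linearZ /= mulrC.
by rewrite -linear_sum /= -row_sum_delta deriveE.
Qed.

Lemma convex_grad (W : set 'rV[R]_m) (f : 'rV[R]_m -> R) w u :
  Defs.convex_on W f -> W w -> W u -> differentiable f w ->
  'D_(u - w) f w <= f u - f w.
Proof.
move=> cf Ww Wu df.
have hd : derivable f w (u - w) := diff_derivable df.
have hr := cvg_dnbhs_at_right hd.
apply: (cvgr_to_le hr).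
near=> h.
have h0 : 0 < h by near: h; exact: nbhs_right_gt.
have h1 : h <= 1 by near: h; apply: nbhs_right_le; exact: ltr01.
rewrite /= -[_ *: _]/(_ * _).
rewrite ler_pdivrMl //.
have -> : h *: (u - w) + w = h *: u + (1 - h) *: w.
  by apply/matrixP => i j; rewrite !mxE; ring.
have := cf u w h Wu Ww; rewrite (ltW h0) h1 => /(_ isT).
lra.
Unshelve. all: by end_near.
Qed.

End Aux.

Section Main.
Variables (R : realType) (N m : nat) (W : set 'rV[R]_m)
  (mix : 'rV[R]_m -> 'M[R]_(m, N) -> 'I_N -> R) (a : R).
Hypothesis hnice : nice W mix a.
Variables (n : nat) (x : nat -> 'I_N) (P : nat -> 'M[R]_(m, N)).
Hypothesis hP : forall k, (1 <= k <= n)%N -> probmat (P k).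
Variables (w1 : 'rV[R]_m).
Hypothesis hw1 : W w1.

Definition fk k (w : 'rV[R]_m) := ell (x k) (mix w (P k)).

Lemma W0 : W !=set0. Proof. by case: hnice => [[]]. Qed.
Lemma cW : compact W. Proof. by case: hnice => [[]]. Qed.
Lemma cvW : Defs.convex_set W. Proof. by case: hnice => [[]]. Qed.
Lemma a0 : 0 < a. Proof. by case: hnice => _ [_ [_ [_ []]]]. Qed.

Lemma ogd_in al k : W (ogd_w W mix w1 al x P k).
Proof.
elim: k => [|k IH] //=.
by case: (proj_spec (ogd_w W mix w1 al x P k - al *: grad (fun w => ell (x k.+1) (mix w (P k.+1))) (ogd_w W mix w1 al x P k)) W0 cW cvW).
Qed.

Definition Cb (b : R) := a * b ^+ 2 / (4 * (b - 1)).
Definition alb (b : R) := 2 * (1 - b^-1) / a.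

Lemma step b k u : 1 < b -> (1 <= k <= n)%N -> W u ->
  fk k (ogd_w W mix w1 (alb b) x P k.-1) <= b * fk k u +
   Cb b * (nsq (ogd_w W mix w1 (alb b) x P k.-1 - u) - nsq (ogd_w W mix w1 (alb b) x P k - u)).
Proof.
move=> b1 hk Wu.
have Pk := hP hk.
case: k hk Pk => [//|k] hk Pk /=.
set al := alb b.
set z := ogd_w W mix w1 al x P k.
set g := grad _ z.
have Wz : W z := ogd_in al k.
have [_ hpr] := proj_spec (z - al *: g) W0 cW cvW.
have h1 := hpr u Wu.
have E : z - al *: g - u = (z - u) + (- al) *: g.
  by apply/matrixP => i j; rewrite !mxE; ring.
move: h1; rewrite E nsqDZ => h1.
case: hnice => _ [_ [hcv [hdf [ha hgr]]]].
have dz := hdf _ (x k.+1) _ Pk Wz.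
have hc := convex_grad (hcv _ (x k.+1) Pk) Wz Wu dz.
rewrite -grad_dot // in hc.
have hdot : dot (z - u) g = - dot g (u - z).
  rewrite /dot -sumrN; apply: eq_bigr => i _; rewrite !mxE; ring.
have hg := hgr _ (x k.+1) _ Pk Wz; rewrite enorm_sq in hg.
rewrite hdot in h1.
rewrite /fk.
set fz := ell _ (mix z _) in hc hg *.
set fu := ell _ (mix u _) in hc *.
set A := nsq (z - u) in h1 *.
set B := nsq (Defs.proj _ _ - u) in h1 *.
set D := dot g (u - z) in h1 hc.
set G := nsq g in h1 hg.
have bi : b^-1 < 1 by rewrite invf_lt1 // (lt_trans ltr01).
have al0 : 0 < al by rewrite /al /alb divr_gt0 // mulr_gt0 // subr_gt0.
have C0 : 0 <= Cb b.
  rewrite /Cb divr_ge0 //; first by rewrite mulr_ge0 ?sqr_ge0 // ltW.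
  by rewrite mulr_ge0 // subr_ge0 ltW.
have e1 : Cb b * (2 * al) = b.
  rewrite /Cb /al /alb; field.
  by rewrite !(gt_eqF, lt0r_neq0, subr_gt0) //= ?(lt_trans ltr01) // ?ha ?andbT; lra.
have e2 : Cb b * (al ^+ 2 * a) = b - 1.
  rewrite /Cb /al /alb; field.
  by rewrite !(gt_eqF, lt0r_neq0, subr_gt0) //= ?(lt_trans ltr01) // ?ha ?andbT; lra.
have hD : 2 * al * D <= 2 * al * (fu - fz) by rewrite ler_wpM2l // mulr_ge0 // ltW.
have hG : al ^+ 2 * G <= al ^+ 2 * (a * fz) by rewrite ler_wpM2l // sqr_ge0.
have hAB : 2 * al * (fz - fu) - al ^+ 2 * a * fz <= A - B.
  have e3 : 2 * - al * - D = 2 * al * D by ring.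
  move: h1; rewrite e3 sqrrN => h1.
  lra.
have := ler_wpM2l C0 hAB.
have -> : Cb b * (2 * al * (fz - fu) - al ^+ 2 * a * fz) =
   (Cb b * (2 * al)) * (fz - fu) - (Cb b * (al ^+ 2 * a)) * fz by ring.
rewrite e1 e2; lra.
Qed.


Notation wb b j := (ogd_w W mix w1 (alb b) x P j).

Lemma seg_step b p d u : 1 < b -> (1 <= p)%N -> (p + d <= n.+1)%N -> W u ->
  \sum_(p <= k < p + d) fk k (wb b k.-1) <= b * \sum_(p <= k < p + d) fk k u
   + Cb b * (nsq (wb b p.-1 - u) - nsq (wb b (p + d).-1 - u)).
Proof.
move=> b1 p1 hd Wu; elim: d hd => [|d IH] hd.
  by rewrite addn0 !big_geq // subrr !mulr0 addr0.
rewrite addnS in hd *.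
rewrite !big_nat_recr /=; try by rewrite leq_addr.
have h2 := IH (ltnW hd).
have st := @step b (p + d) u b1 _ Wu.
have hpd : (1 <= p + d <= n)%N by apply/andP; split; lia.
move: (st hpd) h2; set A := \sum_(p <= k < p + d) _; set B := \sum_(p <= k < p + d) _.
rewrite mulrDr. set C := Cb b.
move=> h1 h2.
have e : C * (nsq (wb b p.-1 - u) - nsq (wb b (p + d).-1 - u)) + C * (nsq (wb b (p + d).-1 - u) - nsq (wb b (p + d) - u)) = C * (nsq (wb b p.-1 - u) - nsq (wb b (p + d) - u)) by ring.
lra.
Qed.


Lemma seg_mono s t : segmentation n s t ->
  forall i j, (1 <= i)%N -> (i <= j <= s.+1)%N -> (t i <= t j)%N.
Proof.
case=> _ _ _ ht i j i1; elim: j => [|j IH]; first by lia.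
move=> /andP[ij js].
case: (ltngtP i j.+1) => [lt|gt|->//]; last by lia.
have := IH (_ : (i <= j <= s.+1)%N); have := ht j (_ : (1 <= j <= s)%N).
by move=> h1 h2; apply: leq_trans (ltnW (h1 _)); [apply: h2|]; apply/andP; split; lia.
Qed.

Lemma seg_sum s t (g : nat -> R) : segmentation n s t ->
  \sum_(1 <= k < n.+1) g k = \sum_(1 <= i < s.+1) \sum_(t i <= k < t i.+1) g k.
Proof.
move=> hs; have hm := seg_mono hs; case: hs => hs1 t1 ts _.
suff H : forall j, (1 <= j <= s.+1)%N ->
    \sum_(1 <= k < t j) g k = \sum_(1 <= i < j) \sum_(t i <= k < t i.+1) g k.
  by rewrite -ts H //; lia.
elim=> [|j IH] hj; first by lia.
case: (posnP j) => [->|j0]; first by rewrite t1 !big_geq.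
rewrite big_nat_recr /=; last by lia.
rewrite -IH; last by lia.
rewrite -big_cat_nat //; last by apply: hm; lia.
by rewrite -t1; apply: hm; lia.
Qed.

Lemma part1 b s t : 1 < b -> segmentation n s t ->
  ogd_len W mix w1 (alb b) x P n <=
   Cb b * diam W ^+ 2 * s%:R + b * \sum_(1 <= i < s.+1) lstar W mix x P (t i) (t i.+1).-1.
Proof.
move=> b1 hs.
have hm := seg_mono hs.
have [hs1 t1 ts _] := hs.
rewrite /ogd_len (seg_sum _ hs) mulr_sumr.
have -> : Cb b * diam W ^+ 2 * s%:R = \sum_(1 <= i < s.+1) (Cb b * diam W ^+ 2).
  by rewrite sumr_const_nat subn1 /= mulr_natr.
rewrite -big_split /=; apply: ler_sum_nat => i hi.
have ti1 : (1 <= t i)%N by rewrite -t1; apply: hm; lia.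
have tlt : (t i < t i.+1)%N by case: hs => _ _ _ ht; apply: ht; lia.
have tn : (t i.+1 <= n.+1)%N by rewrite -ts; apply: hm; lia.
have C0 : 0 <= Cb b.
  rewrite /Cb divr_ge0 //; first by rewrite mulr_ge0 ?sqr_ge0 // ltW // a0.
  by rewrite mulr_ge0 // subr_ge0 ltW.
set S := \sum_(t i <= k < t i.+1) _.
suff : (S - Cb b * diam W ^+ 2) / b <= lstar W mix x P (t i) (t i.+1).-1.
  by rewrite ler_pdivrMr ?(lt_trans ltr01) //; lra.
apply: lb_le_inf.
  by have [w Ww] := W0; exists (\sum_(t i <= k < (t i.+1).-1.+1) ell (x k) (mix w (P k))), w.
move=> _ [u Wu <-].
have tq : (t i.+1).-1.+1 = t i.+1 by lia.
rewrite tq ler_pdivrMr; last by apply: lt_trans b1.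
have e : (t i + (t i.+1 - t i))%N = t i.+1 by lia.
have := @seg_step b (t i) (t i.+1 - t i) u b1 ti1.
rewrite e => /(_ tn Wu).
rewrite /fk -/S.
have hD : forall j, nsq (wb b j - u) <= diam W ^+ 2.
  move=> j; rewrite -enorm_sq.
  have h1 := diam_bound W0 cW (ogd_in (alb b) j) Wu.
  have h0 : 0 <= enorm (wb b j - u) by apply: sqrtr_ge0.
  rewrite ler_sqr ?nnegrE //; exact: le_trans h1.
have hA := hD (t i).-1; have hB := nsq_ge0 (wb b (t i.+1).-1 - u).
move: hA hB; set A := nsq (wb b (t i).-1 - u); set B := nsq (wb b (t i.+1).-1 - u).
set F := \sum_(_ <= _ < _) _.
move=> hA hB h.
have : Cb b * (A - B) <= Cb b * diam W ^+ 2 by apply: ler_wpM2l => //; lra.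
lra.
Qed.


Lemma seg_lstar c s t : 
  (forall (k : nat) (y : nat -> 'I_N) (Q : nat -> 'M[R]_(m, N)),
        (1 <= k)%N -> (forall j, (1 <= j <= k)%N -> probmat (Q j)) ->
        lstar W mix y Q 1 k <= c * k%:R) ->
  segmentation n s t ->
  \sum_(1 <= i < s.+1) lstar W mix x P (t i) (t i.+1).-1 <= c * n%:R.
Proof.
move=> hc hs.
have hm := seg_mono hs.
have [hs1 t1 ts _] := hs.
have -> : n%:R = \sum_(1 <= k < n.+1) (1 : R) by rewrite sumr_const_nat subn1.
rewrite (seg_sum _ hs) mulr_sumr; apply: ler_sum_nat => i hi.
have ti1 : (1 <= t i)%N by rewrite -t1; apply: hm; lia.
have tlt : (t i < t i.+1)%N by case: hs => _ _ _ ht; apply: ht; lia.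
have tn : (t i.+1 <= n.+1)%N by rewrite -ts; apply: hm; lia.
rewrite sumr_const_nat.
set k := (t i.+1 - t i)%N.
have hk : (1 <= k)%N by rewrite /k; lia.
have hQ : forall j, (1 <= j <= k)%N -> probmat (P (j + (t i).-1)%N).
  move=> j hj; apply: hP; rewrite /k in hj; apply/andP; split; lia.
have := hc k (fun j => x (j + (t i).-1)%N) (fun j => P (j + (t i).-1)%N) hk hQ.
suff -> : lstar W mix x P (t i) (t i.+1).-1 =
  lstar W mix (fun j => x (j + (t i).-1)%N) (fun j => P (j + (t i).-1)%N) 1 k by [].
rewrite /lstar; congr inf; apply: eq_imagel => w _.
have tq : (t i.+1).-1.+1 = t i.+1 by lia.
rewrite tq -{1}(prednK ti1) -add1n big_addn.
have -> : (t i.+1 - (t i).-1)%N = k.+1 by rewrite /k; lia.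
by [].
Qed.

Lemma part2 c s t : 
  (forall (k : nat) (y : nat -> 'I_N) (Q : nat -> 'M[R]_(m, N)),
        (1 <= k)%N -> (forall j, (1 <= j <= k)%N -> probmat (Q j)) ->
        lstar W mix y Q 1 k <= c * k%:R) ->
  segmentation n s t ->
  ogd_len W mix w1 (2 / a * (1 + Num.sqrt n%:R)^-1) x P n <=
         (a * s%:R * diam W ^+ 2 + c) * Num.sqrt n%:R
         + \sum_(1 <= i < s.+1) lstar W mix x P (t i) (t i.+1).-1.
Proof.
move=> hc hs.
have hS := seg_lstar hc hs.
have [hs1 _ _ _] := hs.
set r := Num.sqrt n%:R.
have r1 : 1 <= r by rewrite /r -{1}sqrtr1 ler_sqrt // ler1n; lia.
have r0 : 0 < r by apply: lt_le_trans r1.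
have rn : r ^+ 2 = n%:R by rewrite sqr_sqrtr.
set b := 1 + r^-1.
have b1 : 1 < b by rewrite /b ltrDl invr_gt0.
have ha := a0.
have ea : 2 / a * (1 + r)^-1 = alb b.
  rewrite /alb /b; field.
  by rewrite !(gt_eqF, lt0r_neq0) //= ?andbT; lra.
rewrite ea; apply: le_trans (part1 b1 hs) _.
have eC : Cb b = a * (r + 1) ^+ 2 / (4 * r).
  rewrite /Cb /b; field.
  by rewrite !(gt_eqF, lt0r_neq0) //= ?andbT; lra.
set S := \sum_(_ <= _ < _) _ in hS *.
set D := diam W ^+ 2.
have D0 : 0 <= D by rewrite /D sqr_ge0.
have h2 : (r + 1) ^+ 2 / (4 * r) <= r.
  rewrite ler_pdivrMr; last by lra.
  nra.
have h3 : a * D * s%:R * ((r + 1) ^+ 2 / (4 * r)) <= a * D * s%:R * r.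
  apply: (ler_wpM2l _ h2); apply: mulr_ge0 => //; apply: mulr_ge0 => //; exact: ltW.
have eb : b * S = S + S / r by rewrite /b; field; rewrite gt_eqF.
have h4 : S / r <= c * r.
  by rewrite ler_pdivrMr // -mulrA -expr2 rn.
have e5 : Cb b * D * s%:R = a * D * s%:R * ((r + 1) ^+ 2 / (4 * r)).
  by rewrite eC; ring.
rewrite eb e5.
have e6 : (a * s%:R * D + c) * r = a * D * s%:R * r + c * r by ring.
rewrite e6; lra.
Qed.

End Main.

Theorem theorem1 (R : realType) (N m : nat) (hN : (1 < N)%N) (hm : (1 < m)%N)
  (W : set 'rV[R]_m) (mix : 'rV[R]_m -> 'M[R]_(m, N) -> 'I_N -> R) (a : R)
  (hnice : nice W mix a)
  (n : nat) (hn : (1 <= n)%N) (x : nat -> 'I_N) (P : nat -> 'M[R]_(m, N))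
  (hP : forall k, (1 <= k <= n)%N -> probmat (P k))
  (w1 : 'rV[R]_m) (hw1 : W w1) :
  (forall b : R, 1 < b ->
     forall (s : nat) (t : nat -> nat), segmentation n s t ->
       ogd_len W mix w1 (2 * (1 - b^-1) / a) x P n <=
         a * b ^+ 2 * diam W ^+ 2 / (4 * (b - 1)) * s%:R
         + b * \sum_(1 <= i < s.+1) lstar W mix x P (t i) (t i.+1).-1)
  /\
  (forall c : R, 0 < c ->
     (forall (k : nat) (y : nat -> 'I_N) (Q : nat -> 'M[R]_(m, N)),
        (1 <= k)%N -> (forall j, (1 <= j <= k)%N -> probmat (Q j)) ->
        lstar W mix y Q 1 k <= c * k%:R) ->
     forall (s : nat) (t : nat -> nat), segmentation n s t ->
       ogd_len W mix w1 (2 / a * (1 + Num.sqrt n%:R)^-1) x P n <=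
         (a * s%:R * diam W ^+ 2 + c) * Num.sqrt n%:R
         + \sum_(1 <= i < s.+1) lstar W mix x P (t i) (t i.+1).-1).
Proof.
Proof.
split.
- move=> b b1 s t hs.
  have := part1 hnice x hP hw1 b1 hs.
  have -> : Cb a b * diam W ^+ 2 = a * b ^+ 2 * diam W ^+ 2 / (4 * (b - 1)).
    by rewrite /Cb mulrAC.
  by [].
- move=> c _ hc s t hs.
  exact: (part2 hnice x hP hw1 hc hs).
Qed.
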